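(* Let $X$ be a topological space which is the disjoint union $X=A_1\sqcup A_2$ of two open subsets $A_1,A_2$, and let $e_1\in A_1$, $e_2\in A_2$. Then the free Graev topological group $F_G(X,e_1)$ is isomorphic, as a topological group, to the free Markov topological group $F_M(A_1\vee A_2)$ on the wedge sum $A_1\vee A_2=X/\{e_1,e_2\}$ (the quotient space of $X$ identifying $e_1$ and $e_2$).
   Context: The free Markov topological group on a space $Y$ is the topological group $F_M(Y)$ with a continuous map $\sigma:Y\to F_M(Y)$ such that every continuous map $f:Y\to G$ into a topological group induces a unique continuous homomorphism $\hat f:F_M(Y)\to G$ with $\hat f\sigma=f$; algebraically it is the free group on the set $Y$. The free Graev topological group $F_G(X,\ast)$ on a based space is the topological group with a continuous map $\sigma_\ast:X\to F_G(X,\ast)$, $\sigma_\ast(\ast)=e$, such that every continuous map $f:X\to G$ into a topological group with $f(\ast)=e$ induces a unique continuous homomorphism $\tilde f$ with $\tilde f\sigma_\ast=f$. No separation axioms are assumed. *)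

(* Defs.v *)
Set Implicit Arguments.
Unset Strict Implicit.

(* A topology on a type T: a family of open subsets closed under finite
   intersections and arbitrary unions (the empty set is the empty union). *)
Record topology (T : Type) := Topology {
  open : (T -> Prop) -> Prop;
  open_full : open (fun _ => True);
  open_inter : forall U V, open U -> open V -> open (fun x => U x /\ V x);
  open_union : forall (I : Type) (F : I -> T -> Prop),
      (forall i, open (F i)) -> open (fun x => exists i, F i x)
}.

Definition continuous (T1 T2 : Type) (t1 : topology T1) (t2 : topology T2)
  (f : T1 -> T2) : Prop :=
  forall U, open t2 U -> open t1 (fun x => U (f x)).

Definition prod_open (T1 T2 : Type) (t1 : topology T1) (t2 : topology T2)
  (U : T1 * T2 -> Prop) : Prop :=
  forall p, U p -> exists V1 V2, open t1 V1 /\ open t2 V2 /\ V1 (fst p) /\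
    V2 (snd p) /\ forall a b, V1 a -> V2 b -> U (a, b).

Record TopGroup := {
  tg_carrier :> Type;
  tg_mul : tg_carrier -> tg_carrier -> tg_carrier;
  tg_inv : tg_carrier -> tg_carrier;
  tg_one : tg_carrier;
  tg_assoc : forall x y z, tg_mul x (tg_mul y z) = tg_mul (tg_mul x y) z;
  tg_mul1 : forall x, tg_mul tg_one x = x;
  tg_mulV : forall x, tg_mul (tg_inv x) x = tg_one;
  tg_top : topology tg_carrier;
  tg_mul_cont : forall U, open tg_top U ->
      prod_open tg_top tg_top (fun p => U (tg_mul (fst p) (snd p)));
  tg_inv_cont : continuous tg_top tg_top tg_inv
}.

Arguments tg_mul {t} _ _.
Arguments tg_inv {t} _.
Arguments tg_one {t}.
Arguments tg_top t : clear implicits.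

Definition group_hom (G H : TopGroup) (f : G -> H) : Prop :=
  forall x y, f (@tg_mul G x y) = @tg_mul H (f x) (f y).

Definition cont_hom (G H : TopGroup) (f : G -> H) : Prop :=
  group_hom f /\ continuous (tg_top G) (tg_top H) f.

Definition is_free_markov (Y : Type) (tY : topology Y) (F : TopGroup)
  (sigma : Y -> F) : Prop :=
  continuous tY (tg_top F) sigma /\
  forall (G : TopGroup) (f : Y -> G), continuous tY (tg_top G) f ->
    exists h : F -> G,
      (cont_hom h /\ forall y, h (sigma y) = f y) /\
      forall h' : F -> G, cont_hom h' -> (forall y, h' (sigma y) = f y) ->
        forall z, h' z = h z.

Definition is_free_graev (X : Type) (tX : topology X) (pt : X) (F : TopGroup)
  (sigma : X -> F) : Prop :=
  continuous tX (tg_top F) sigma /\ sigma pt = @tg_one F /\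
  forall (G : TopGroup) (f : X -> G), continuous tX (tg_top G) f ->
    f pt = @tg_one G ->
    exists h : F -> G,
      (cont_hom h /\ forall x, h (sigma x) = f x) /\
      forall h' : F -> G, cont_hom h' -> (forall x, h' (sigma x) = f x) ->
        forall z, h' z = h z.

Definition is_quotient_identifying (X : Type) (tX : topology X) (a b : X)
  (W : Type) (tW : topology W) (q : X -> W) : Prop :=
  (forall w, exists x, q x = w) /\
  (forall x y, q x = q y <-> (x = y \/ (x = a /\ y = b) \/ (x = b /\ y = a))) /\
  (forall U : W -> Prop, open tW U <-> open tX (fun x => U (q x))).

Definition top_group_iso (G H : TopGroup) : Prop :=
  exists (phi : G -> H) (psi : H -> G),
    group_hom phi /\ continuous (tg_top G) (tg_top H) phi /\
    continuous (tg_top H) (tg_top G) psi /\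
    (forall x, psi (phi x) = x) /\ (forall y, phi (psi y) = y).

(* Main.v *)
Require Import Defs.
From Stdlib Require Import ClassicalEpsilon FunctionalExtensionality PropExtensionality Classical.

Lemma pred_ext {T} (P Q : T -> Prop) : (forall x, P x <-> Q x) -> P = Q.
Proof. intro H; apply functional_extensionality; intro x; apply propositional_extensionality; auto. Qed.

Lemma open_local T (t : topology T) (S : T -> Prop) :
  (forall x, S x -> exists O, open t O /\ O x /\ forall y, O y -> S y) -> open t S.
Proof.
  intro H.
  assert (E : S = fun x => exists i : {O : T -> Prop | open t O /\ forall y, O y -> S y}, proj1_sig i x).
  { apply pred_ext; intro x; split.
    - intro Sx. destruct (H x Sx) as [O [HO [Ox HS]]]. exists (exist _ O (conj HO HS)). exact Ox.
    - intros [i Oi]. destruct i as [O [HO HS]]. exact (HS x Oi). }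
  assert (HU : open t (fun x => exists i : {O : T -> Prop | open t O /\ forall y, O y -> S y}, proj1_sig i x)) by (apply open_union; intros [O [HO HS]]; exact HO).
  rewrite <- E in HU. exact HU.
Qed.

Lemma cont_comp T1 T2 T3 (t1 : topology T1) (t2 : topology T2) (t3 : topology T3)
  (f : T1 -> T2) (g : T2 -> T3) :
  continuous t1 t2 f -> continuous t2 t3 g -> continuous t1 t3 (fun x => g (f x)).
Proof. intros Hf Hg U HU. apply (Hf _ (Hg _ HU)). Qed.

Lemma cont_id T (t : topology T) : continuous t t (fun x : T => x).
Proof. intros U HU. exact HU. Qed.

Lemma cont_const T1 T2 (t1 : topology T1) (t2 : topology T2) (c : T2) :
  continuous t1 t2 (fun _ : T1 => c).
Proof.
  intros U _. destruct (classic (U c)) as [H|H].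
  - replace (fun _ : T1 => U c) with (fun _ : T1 => True) by (apply pred_ext; tauto).
    apply open_full.
  - apply open_local. intros x Hx. contradiction.
Qed.

Lemma cont_mul T (t : topology T) (G : TopGroup) (u v : T -> G) :
  continuous t (tg_top G) u -> continuous t (tg_top G) v ->
  continuous t (tg_top G) (fun x => tg_mul (u x) (v x)).
Proof.
  intros Hu Hv U HU. apply open_local. intros x Hx.
  destruct (@tg_mul_cont G U HU (u x, v x) Hx) as [V1 [V2 [H1 [H2 [a [b Hab]]]]]].
  exists (fun y => V1 (u y) /\ V2 (v y)). split; [apply open_inter; [apply Hu|apply Hv]; auto|].
  split; [auto|]. intros y [? ?]. apply (Hab (u y) (v y)); auto.
Qed.

Lemma cont_piece T1 T2 (t1 : topology T1) (t2 : topology T2) (A1 A2 : T1 -> Prop)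
  (f f1 f2 : T1 -> T2) : open t1 A1 -> open t1 A2 -> (forall x, A1 x \/ A2 x) ->
  continuous t1 t2 f1 -> continuous t1 t2 f2 -> (forall x, A1 x -> f x = f1 x) ->
  (forall x, A2 x -> f x = f2 x) -> continuous t1 t2 f.
Proof.
  intros hA1 hA2 hc H1 H2 E1 E2 U HU. apply open_local. intros x Hx.
  destruct (hc x) as [a|a].
  - exists (fun y => A1 y /\ U (f1 y)). split; [apply open_inter; auto|].
    split; [split; [auto| rewrite <- E1; auto]|]. intros y [ay uy]; rewrite E1; auto.
  - exists (fun y => A2 y /\ U (f2 y)). split; [apply open_inter; auto|].
    split; [split; [auto| rewrite <- E2; auto]|]. intros y [ay uy]; rewrite E2; auto.
Qed.

Section Grp.
Variable G : TopGroup.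
Lemma mulV_r (x : G) : tg_mul x (tg_inv x) = tg_one.
Proof.
  rewrite <- (@tg_mul1 G (tg_mul x (tg_inv x))).
  rewrite <- (@tg_mulV G (tg_inv x)) at 1.
  rewrite <- tg_assoc. rewrite (@tg_assoc G (tg_inv x) x (tg_inv x)).
  rewrite tg_mulV, tg_mul1. apply tg_mulV.
Qed.
Lemma mul1_r (x : G) : tg_mul x tg_one = x.
Proof. rewrite <- (@tg_mulV G x), tg_assoc, mulV_r, tg_mul1. reflexivity. Qed.
Lemma inv_uniq (y x : G) : tg_mul y x = tg_one -> y = tg_inv x.
Proof. intro H. rewrite <- (mul1_r y), <- (mulV_r x), tg_assoc, H, tg_mul1. reflexivity. Qed.
End Grp.

Lemma hom_one (G H : TopGroup) (h : G -> H) : group_hom h -> h tg_one = tg_one.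
Proof.
  intro hh. assert (E : h tg_one = tg_mul (h tg_one) (h tg_one)).
  { rewrite <- hh, tg_mul1. reflexivity. }
  rewrite <- (@tg_mulV H (h tg_one)). rewrite E at 3.
  rewrite tg_assoc, tg_mulV, tg_mul1. reflexivity.
Qed.

Lemma hom_inv (G H : TopGroup) (h : G -> H) (a : G) : group_hom h ->
  h (tg_inv a) = tg_inv (h a).
Proof.
  intro hh. apply inv_uniq. rewrite <- hh, tg_mulV. apply hom_one; auto.
Qed.

Theorem lemma2 (X : Type) (tX : topology X) (A1 A2 : X -> Prop)
  (hA1 : open tX A1) (hA2 : open tX A2)
  (hcover : forall x, A1 x \/ A2 x) (hdisj : forall x, A1 x -> A2 x -> False)
  (e1 e2 : X) (he1 : A1 e1) (he2 : A2 e2)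
  (W : Type) (tW : topology W) (q : X -> W)
  (hW : is_quotient_identifying tX e1 e2 tW q)
  (FG : TopGroup) (sG : X -> FG) (hFG : is_free_graev tX e1 sG)
  (FM : TopGroup) (sM : W -> FM) (hFM : is_free_markov tW sM) :
  top_group_iso FG FM.
Proof.
  destruct hW as [hsurj [hfib hopen]].
  destruct hFG as [sGc [sG1 uG]]. destruct hFM as [sMc uM].
  assert (qc : continuous tX tW q) by (intros U HU; apply (proj1 (hopen U)); exact HU).
  assert (ne2 : ~ A1 e2) by (intro; eapply hdisj; eauto).
  assert (qe : q e2 = q e1) by (apply hfib; auto).
  set (c := sM (q e1)).
  set (f := fun x => if excluded_middle_informative (A1 x)
                     then tg_mul (sM (q x)) (tg_inv c) else sM (q x)).
  assert (fA1 : forall x, A1 x -> f x = tg_mul (sM (q x)) (tg_inv c)).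
  { intros x a; unfold f; destruct (excluded_middle_informative (A1 x)); tauto. }
  assert (fA2 : forall x, ~ A1 x -> f x = sM (q x)).
  { intros x a; unfold f; destruct (excluded_middle_informative (A1 x)); tauto. }
  assert (fc : continuous tX (tg_top FM) f).
  { apply (@cont_piece _ _ _ _ A1 A2 f (fun x => tg_mul (sM (q x)) (tg_inv c))
      (fun x => sM (q x)) hA1 hA2 hcover).
    - apply cont_mul; [apply (@cont_comp _ _ _ _ _ _ _ _ qc sMc)|apply cont_const].
    - apply (@cont_comp _ _ _ _ _ _ _ _ qc sMc).
    - exact fA1.
    - intros x a; apply fA2; intro; eapply hdisj; eauto. }
  assert (f1 : f e1 = tg_one) by (rewrite fA1 by auto; apply mulV_r).
  destruct (uG FM f fc f1) as [phi [[phic phisG] _]].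
  set (Gx := fun x => if excluded_middle_informative (A1 x)
                     then tg_mul (sG x) (sG e2) else sG x).
  assert (GA1 : forall x, A1 x -> Gx x = tg_mul (sG x) (sG e2)).
  { intros x a; unfold Gx; destruct (excluded_middle_informative (A1 x)); tauto. }
  assert (GA2 : forall x, ~ A1 x -> Gx x = sG x).
  { intros x a; unfold Gx; destruct (excluded_middle_informative (A1 x)); tauto. }
  assert (Gc : continuous tX (tg_top FG) Gx).
  { apply (@cont_piece _ _ _ _ A1 A2 Gx (fun x => tg_mul (sG x) (sG e2))
      (fun x => sG x) hA1 hA2 hcover).
    - apply cont_mul; [exact sGc|apply cont_const].
    - exact sGc.
    - exact GA1.
    - intros x a; apply GA2; intro; eapply hdisj; eauto. }
  assert (key : forall x y, q x = q y -> Gx x = Gx y).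
  { intros x y Hq. apply hfib in Hq.
    assert (E : Gx e1 = Gx e2) by (rewrite GA1, GA2, sG1, tg_mul1 by auto; reflexivity).
    destruct Hq as [->|[[-> ->]|[-> ->]]]; auto. }
  pose (r := fun w => proj1_sig (constructive_indefinite_description _ (hsurj w))).
  assert (rq : forall w, q (r w) = w) by (intro w; exact (proj2_sig (constructive_indefinite_description _ (hsurj w)))).
  set (g := fun w => Gx (r w)).
  assert (gq : forall x, g (q x) = Gx x) by (intro x; apply key; apply rq).
  assert (gc : continuous tW (tg_top FG) g).
  { intros U HU. apply (proj2 (hopen (fun w => U (g w)))).
    replace (fun x => U (g (q x))) with (fun x => U (Gx x))
      by (apply pred_ext; intro; rewrite gq; tauto).
    apply Gc; auto. }
  destruct (uM FG g gc) as [psi [[psic psisM] _]].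
  exists phi, psi. split; [exact (proj1 phic)|]. split; [exact (proj2 phic)|].
  split; [exact (proj2 psic)|]. split.
  - destruct (uG FG sG sGc sG1) as [h0 [_ hu]].
    assert (ch : cont_hom (fun z => psi (phi z))).
    { split; [intros a b; rewrite (proj1 phic), (proj1 psic); reflexivity|].
      apply (@cont_comp _ _ _ _ _ _ _ _ (proj2 phic) (proj2 psic)). }
    assert (gen : forall x, psi (phi (sG x)) = sG x).
    { intro x. rewrite phisG. destruct (classic (A1 x)) as [a|a].
      - rewrite fA1 by auto. rewrite (proj1 psic), hom_inv by exact (proj1 psic).
        unfold c. rewrite !psisM, !gq, GA1, GA1, sG1, tg_mul1 by auto.
        rewrite <- tg_assoc, mulV_r, mul1_r. reflexivity.
      - rewrite fA2, psisM, gq, GA2 by auto. reflexivity. }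
    intro z. transitivity (h0 z); [apply (hu _ ch gen)|].
    symmetry. apply (hu (fun z => z)); [split; [intros a b; reflexivity| apply cont_id]| reflexivity].
  - destruct (uM FM sM sMc) as [h1 [_ hu1]].
    assert (ch : cont_hom (fun z => phi (psi z))).
    { split; [intros a b; rewrite (proj1 psic), (proj1 phic); reflexivity|].
      apply (@cont_comp _ _ _ _ _ _ _ _ (proj2 psic) (proj2 phic)). }
    assert (gen : forall w, phi (psi (sM w)) = sM w).
    { intro w. destruct (hsurj w) as [x <-]. rewrite psisM, gq.
      destruct (classic (A1 x)) as [a|a].
      - rewrite GA1, (proj1 phic), !phisG, fA1, (fA2 e2), qe by auto.
        unfold c. rewrite <- tg_assoc, tg_mulV, mul1_r. reflexivity.
      - rewrite GA2, phisG, fA2 by auto. reflexivity. }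
    intro z. transitivity (h1 z); [apply (hu1 _ ch gen)|].
    symmetry. apply (hu1 (fun z => z)); [split; [intros a b; reflexivity| apply cont_id]| reflexivity].
Qed.
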